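(* Let $\mathcal{K}\subseteq\mathbb{R}\cup\{\pm\infty\}$ have nonzero Lebesgue measure, let $\varpi:\mathcal{K}\to\mathbb{R}_{\geq 0}$ be Lebesgue integrable with only countably many zeros, let $d,n,\rho\in\mathbb{N}$, let $\mathbf{f}\in\mathbb{L}^2_{\varpi}(\mathcal{K};\mathbb{R}^d)$ satisfy $\mathsf{F}^{-1}:=\int_{\mathcal{K}}\varpi(\tau)\mathbf{f}(\tau)\mathbf{f}^\top(\tau)\,d\tau\succ 0$, put $F(\tau)=\mathbf{f}(\tau)\otimes I_n$, and let $U\in\mathbb{R}^{n\times n}$ be symmetric with $U\succ 0$. Let $\mathbf{x}\in\mathbb{L}^2_{\varpi}(\mathcal{K};\mathbb{R}^n)$ and let $\Upsilon\in\mathbb{R}^{dn\times\rho n}$, $\mathbf{z}\in\mathbb{R}^{\rho n}$ satisfy $\Upsilon\mathbf{z}=\int_{\mathcal{K}}\varpi(\tau)F(\tau)\mathbf{x}(\tau)\,d\tau=:\boldsymbol{\vartheta}$. Then for every $\widehat{X}=\mathrm{Col}_{i=1}^dX_i\in\mathbb{R}^{dn\times\rho n}$ ($X_i\in\mathbb{R}^{n\times\rho n}$), $$\int_{\mathcal{K}}\varpi(\tau)\mathbf{x}^\top(\tau)U\mathbf{x}(\tau)\,d\tau\geq\mathbf{z}^\top\big[\Upsilon^\top\widehat{X}+\widehat{X}^\top\Upsilon-\widehat{X}^\top(\mathsf{F}^{-1}\otimes U^{-1})\widehat{X}\big]\mathbf{z}.$$ Moreover, this right-hand side equals $\mathbf{z}^\top[\Upsilon^\top\widehat{X}+\widehat{X}^\top\Upsilon-W]\mathbf{z}$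 with $W=\int_{\mathcal{K}}\varpi(\tau)(\mathbf{f}^\top(\tau)\otimes I_{\rho n})Y(\mathbf{f}(\tau)\otimes I_{\rho n})\,d\tau$ for the choice $Y=X^\top U^{-1}X$, $X=[X_1\ \cdots\ X_d]$; and the largest value of the right-hand side over $\widehat{X}$ equals $\boldsymbol{\vartheta}^\top(\mathsf{F}\otimes U)\boldsymbol{\vartheta}$, attained at $\widehat{X}=(\mathsf{F}\otimes U)\Upsilon$.
   Context: $\mathbb{L}^2_{\varpi}(\mathcal{K};\mathbb{R}^m)$ is the set of Lebesgue integrable functions $\phi:\mathcal{K}\to\mathbb{R}^m$ with $\int_{\mathcal{K}}\varpi\phi^\top\phi\,d\tau<\infty$. $\mathrm{Col}$ stacks blocks vertically; $\otimes$ is the Kronecker product. *)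

(* Defs.v *)
From HB Require Import structures.
From mathcomp Require Import all_boot all_order all_algebra.
From mathcomp Require Import all_classical all_reals all_analysis.
From mathcomp.real_closed Require Export mxtens.
Set Implicit Arguments. Unset Strict Implicit. Unset Printing Implicit Defensive.
Import Order.TTheory GRing.Theory Num.Theory.
Local Open Scope classical_set_scope.
Local Open Scope ring_scope.

(* Kronecker product: [tensmx A B] (notation A *t B) from mathcomp real_closed
   mxtens, with (A *t B) (i1*p + i2) (j1*q + j2) = A i1 j1 * B i2 j2. *)

Section Defs.
Variable R : realType.

Definition leb := (@lebesgue_measure R).

(* symmetric positive definite is stated separately; this is x^T M x > 0 *)
Definition posdef k (M : 'M[R]_k) : Prop :=
  forall v : 'cV[R]_k, v != 0 -> 0 < (v^T *m M *m v) 0 0.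

Definition wint (K : set R) (w : R -> R) p q (M : R -> 'M[R]_(p, q)) : 'M[R]_(p, q) :=
  \matrix_(i, j) Rintegral leb K (fun t => w t * M t i j).

Definition L2w (K : set R) (w : R -> R) m (g : R -> 'cV[R]_m) : Prop :=
  (forall i, measurable_fun K (fun t => g t i 0)) /\
  leb.-integrable K (fun t => (w t * ((g t)^T *m g t) 0 0)%:E).

Definition Fk d n (f : R -> 'cV[R]_d) (t : R) : 'M[R]_(d * n, n) :=
  castmx (erefl _, mul1n n) (f t *t (1%:M : 'M[R]_n)).

Definition blk d n r (Xhat : 'M[R]_(d * n, r)) (i : 'I_d) : 'M[R]_(n, r) :=
  \matrix_(a, b) Xhat (mxtens_index (i, a)) b.

Definition rowcat d n r (Xhat : 'M[R]_(d * n, r)) : 'M[R]_(n, d * r) :=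
  \matrix_(a, c) blk Xhat (mxtens_unindex c).1 a (mxtens_unindex c).2.

Definition Wmx (K : set R) (w : R -> R) d n r (f : R -> 'cV[R]_d)
  (U : 'M[R]_n) (Xhat : 'M[R]_(d * n, r)) : 'M[R]_r :=
  let X := rowcat Xhat in
  let Y := X^T *m invmx U *m X in
  wint K w (fun t => castmx (mul1n r, mul1n r)
    (((f t)^T *t (1%:M : 'M[R]_r)) *m Y *m (f t *t (1%:M : 'M[R]_r)))).

End Defs.

(* Main.v *)
Require Import Defs.
From HB Require Import structures.
From mathcomp Require Import all_boot all_order all_algebra.
From mathcomp Require Import all_classical all_reals all_analysis.
From mathcomp Require Import measurable_realfun.
From mathcomp.real_closed Require Import mxtens.
From mathcomp.algebra_tactics Require Import ring lra.
Import Order.TTheory GRing.Theory Num.Theory.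
Local Open Scope classical_set_scope.
Local Open Scope ring_scope.

Section Integ.
Variable R : realType.
Set Implicit Arguments.
Unset Strict Implicit.
Variable K : set (measurableTypeR R).
Variable w : R -> R.
Hypothesis mK : measurable K.
Hypothesis w0 : forall t, K t -> 0 <= w t.
Hypothesis mw : measurable_fun K w.

Definition wI (g : R -> R) := (@leb R).-integrable K (EFin \o (fun t => w t * g t)).
Definition RI (g : R -> R) := Rintegral (@leb R) K (fun t => w t * g t).

Lemma wID g h : wI g -> wI h -> wI (fun t => g t + h t).
Proof.
move=> ig ih; rewrite /wI.
have := integrableD mK ig ih.
by apply: eq_integrable => // t _ /=; rewrite mulrDr EFinD.
Qed.

Arguments wID {g h}.

Lemma wIZ c g : wI g -> wI (fun t => c * g t).
Proof.
move=> ig; have := integrableZl mK c ig.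
by apply: eq_integrable => // t _ /=; rewrite mulrCA EFinM.
Qed.
Arguments wIZ c {g}.

Lemma RID g h : wI g -> wI h -> RI (fun t => g t + h t) = RI g + RI h.
Proof.
move=> ig ih; rewrite /RI -RintegralD //.
by apply: eq_Rintegral => t _; rewrite mulrDr.
Qed.
Arguments RID {g h}.

Lemma RIZ c g : wI g -> RI (fun t => c * g t) = c * RI g.
Proof.
move=> ig; rewrite /RI -RintegralZl //.
by apply: eq_Rintegral => t _; rewrite mulrCA.
Qed.
Arguments RIZ c {g}.

Lemma wI0 : wI (fun=> 0).
Proof.
apply: (eq_integrable _ (cst 0%E)) => //; last exact: integrable0.
by move=> t _ /=; rewrite mulr0.
Qed.

Lemma RI0 : RI (fun=> 0) = 0.
Proof.
rewrite /RI (_ : (fun t => w t * 0) = fun=> 0); last by apply: funext => t; rewrite mulr0.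
by rewrite Rintegral_cst // mul0r.
Qed.

Lemma eq_wI g h : (forall t, g t = h t) -> wI g -> wI h.
Proof. move=> e ig; apply: (eq_integrable mK _ _ _ ig) => t _ /=; by rewrite e. Qed.
Arguments eq_wI {g h}.

Lemma wI_sum (I : Type) (s : seq I) (P : pred I) (g : I -> R -> R) :
  (forall i, wI (g i)) -> wI (fun t => \sum_(i <- s | P i) g i t).
Proof.
move=> ig; elim: s => [|i s IH].
  by apply: (eq_wI _ wI0) => t /=; rewrite big_nil.
have [Pi|nPi] := boolP (P i).
  by apply: (eq_wI _ (wID (ig i) IH)) => t /=; rewrite big_cons Pi.
by apply: (eq_wI _ IH) => t /=; rewrite big_cons (negbTE nPi).
Qed.

Lemma eq_RI g h : (forall t, g t = h t) -> RI g = RI h.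
Proof. by move=> e; rewrite /RI; apply: eq_Rintegral => t _; rewrite e. Qed.
Arguments eq_RI {g h}.

Lemma RI_sum (I : Type) (s : seq I) (P : pred I) (g : I -> R -> R) :
  (forall i, wI (g i)) -> RI (fun t => \sum_(i <- s | P i) g i t) = \sum_(i <- s | P i) RI (g i).
Proof.
move=> ig; elim: s => [|i s IH].
  rewrite big_nil; rewrite -[RHS]RI0; apply: eq_RI => t; by rewrite big_nil.
have [Pi|nPi] := boolP (P i).
  rewrite big_cons Pi -IH -RID //; last exact: wI_sum.
  by rewrite /RI; apply: eq_Rintegral => t _ /=; rewrite big_cons Pi.
rewrite big_cons (negbTE nPi) -IH /RI; apply: eq_Rintegral => t _ /=.
by rewrite big_cons (negbTE nPi).
Qed.



Lemma RI_ge0 g : (forall t, K t -> 0 <= g t) -> 0 <= RI g.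
Proof. by move=> g0; apply: Rintegral_ge0 => t Kt; rewrite mulr_ge0 ?w0 ?g0. Qed.

Lemma sq_le_sum m (g : 'cV[R]_m) i : g i 0 ^+ 2 <= (g^T *m g) 0 0.
Proof.
rewrite mxE (bigD1 i) //= mxE -expr2 lerDl.
by apply: sumr_ge0 => k _; rewrite mxE -expr2 sqr_ge0.
Qed.

Lemma wI_prod m p (g : R -> 'cV[R]_m) (h : R -> 'cV[R]_p) i j :
  L2w K w g -> L2w K w h -> wI (fun t => g t i 0 * h t j 0).
Proof.
move=> [mg ig] [mh ih].
have := integrableD mK ig ih => iD.
apply: le_integrable iD => //.
  apply/measurable_EFinP; apply: measurable_funM => //.
  have := measurable_funM (mg i) (mh j).
  exact.
move=> t Kt /=; rewrite lee_fin.
have wt : 0 <= w t by apply: w0.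
have ga := sq_le_sum (g t) i; have hb := sq_le_sum (h t) j.
set a := g t i 0 in ga *; set b := h t j 0 in hb *.
set G := (_ 0 0) in ga; set H := (_ 0 0) in hb.
rewrite -mulrDr normrM (ger0_norm wt) [X in _ <= X]ger0_norm; last first.
  by rewrite mulr_ge0 // addr_ge0 // (le_trans _ ga, le_trans _ hb) ?sqr_ge0.
apply: ler_wpM2l => //; apply: (le_trans _ (lerD ga hb)).
rewrite normrM -(real_normK (num_real a)) -(real_normK (num_real b)).
have := normr_ge0 a; have := normr_ge0 b; nra.
Qed.


Definition ient {p q} (M : R -> 'M[R]_(p, q)) := forall i j, wI (fun t => M t i j).

Lemma wintE p q (M : R -> 'M[R]_(p, q)) i j : wint K w M i j = RI (fun t => M t i j).
Proof. by rewrite mxE. Qed.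

Lemma mulmx3E {p q r s} (A : 'M[R]_(p, q)) (M : 'M[R]_(q, r)) (B : 'M[R]_(r, s)) i j :
  (A *m M *m B) i j = \sum_l \sum_k (A i k * B l j) * M k l.
Proof.
rewrite mxE; apply: eq_bigr => l _; rewrite mxE mulr_suml; apply: eq_bigr => k _.
by rewrite mulrAC -mulrA.
Qed.

Lemma ient_mulmx p q r s (A : 'M[R]_(p, q)) (M : R -> 'M[R]_(q, r)) (B : 'M[R]_(r, s)) :
  ient M -> ient (fun t => A *m M t *m B).
Proof.
move=> iM i j; apply: (@eq_wI (fun t => \sum_l \sum_k (A i k * B l j) * M t k l)).
  by move=> t; rewrite mulmx3E.
by apply: wI_sum => l; apply: wI_sum => k; apply: wIZ.
Qed.

Lemma wint_mulmx p q r s (A : 'M[R]_(p, q)) (M : R -> 'M[R]_(q, r)) (B : 'M[R]_(r, s)) :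
  ient M -> wint K w (fun t => A *m M t *m B) = A *m wint K w M *m B.
Proof.
move=> iM; apply/matrixP => i j; rewrite wintE mulmx3E.
rewrite (eq_RI (fun t => mulmx3E A (M t) B i j)) RI_sum; last first.
  by move=> l; apply: wI_sum => k; apply: wIZ.
apply: eq_bigr => l _; rewrite RI_sum; last by move=> k; apply: wIZ.
by apply: eq_bigr => k _; rewrite RIZ // wintE.
Qed.

Lemma ientD p q (M N : R -> 'M[R]_(p, q)) : ient M -> ient N -> ient (fun t => M t + N t).
Proof. by move=> iM iN i j; apply: (eq_wI _ (wID (iM i j) (iN i j))) => t; rewrite mxE. Qed.

Lemma wintD p q (M N : R -> 'M[R]_(p, q)) : ient M -> ient N ->
  wint K w (fun t => M t + N t) = wint K w M + wint K w N.
Proof.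
move=> iM iN; apply/matrixP => i j; rewrite !mxE -RID //.
by apply: eq_RI => t; rewrite mxE.
Qed.

Lemma ientN p q (M : R -> 'M[R]_(p, q)) : ient M -> ient (fun t => - M t).
Proof. by move=> iM i j; apply: (eq_wI _ (wIZ (-1) (iM i j))) => t; rewrite mxE mulN1r. Qed.

Lemma wintN p q (M : R -> 'M[R]_(p, q)) : ient M ->
  wint K w (fun t => - M t) = - wint K w M.
Proof.
move=> iM; apply/matrixP => i j; rewrite !mxE -mulN1r -RIZ //.
by apply: eq_RI => t; rewrite mxE mulN1r.
Qed.

Lemma wint_tr p q (M : R -> 'M[R]_(p, q)) :
  wint K w (fun t => (M t)^T) = (wint K w M)^T.
Proof. by apply/matrixP => i j; rewrite !mxE; apply: eq_Rintegral => t _; rewrite mxE. Qed.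

Lemma RI_tr p (M : R -> 'M[R]_p) : ient M -> RI (fun t => \tr (M t)) = \tr (wint K w M).
Proof.
move=> iM; rewrite /mxtrace RI_sum //; apply: eq_bigr => i _; by rewrite wintE.
Qed.

Lemma ient_gh m p (g : R -> 'cV[R]_m) (h : R -> 'cV[R]_p) :
  L2w K w g -> L2w K w h -> ient (fun t => g t *m (h t)^T).
Proof.
move=> Lg Lh i j; apply: (eq_wI _ (@wI_prod _ _ g h i j Lg Lh)) => t.
by rewrite mxE big_ord1 mxE.
Qed.

End Integ.

Section Alg.
Variable R : realType.
Set Implicit Arguments.
Unset Strict Implicit.

Definition psd {k} (M : 'M[R]_k) := forall v : 'cV[R]_k, 0 <= (v^T *m M *m v) 0 0.

Lemma posdef_psd k (M : 'M[R]_k) : posdef M -> psd M.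
Proof.
move=> pM v; have [->|v0] := eqVneq v 0; first by rewrite mulmx0 mxE.
exact/ltW/pM.
Qed.

Lemma posdef_unit k (M : 'M[R]_k) : posdef M -> M \in unitmx.
Proof.
move=> pM; rewrite unitmxE unitfE; apply/negP => /det0P [v v0 vM].
have := pM v^T; rewrite trmx_eq0 => /(_ v0); rewrite trmxK vM mul0mx mxE.
by rewrite ltxx.
Qed.

Lemma psd_inv k (U : 'M[R]_k) : U^T = U -> posdef U -> psd (invmx U).
Proof.
move=> sU pU v; have uU := posdef_unit pU.
set s := invmx U *m v.
have -> : v = U *m s by rewrite /s mulmxA mulmxV // mul1mx.
rewrite trmx_mul sU -!mulmxA [invmx U *m _]mulmxA mulVmx // mul1mx mulmxA.
exact: posdef_psd.
Qed.

Lemma sum_tens d n (F : 'I_(d * n) -> R) :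
  \sum_p F p = \sum_i \sum_k F (mxtens_index (i, k)).
Proof.
rewrite pair_big /=; rewrite (reindex (@mxtens_index d n)) /=.
  by apply: eq_bigr => -[i k] _.
by exists (@mxtens_unindex d n) => p _; rewrite (mxtens_indexK, mxtens_unindexK).
Qed.

Lemma tens11 d n : (1%:M : 'M[R]_d) *t (1%:M : 'M[R]_n) = 1%:M.
Proof.
apply/matrixP => p q.
case: (mxtens_indexP p) => i k; case: (mxtens_indexP q) => j l.
rewrite tensmxE !mxE -natrM mulnb; congr (_%:R); congr nat_of_bool.
apply/idP/idP.
  by case/andP => /eqP -> /eqP ->.
by move/eqP/(congr1 (@mxtens_unindex d n)); rewrite !mxtens_indexK => -[-> ->]; rewrite !eqxx.
Qed.

Lemma reshapeE d n (A : 'M[R]_d) (B : 'M[R]_n) (u : 'cV[R]_(d * n)) :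
  let V := \matrix_(k, i) u (mxtens_index (i, k)) 0 in
  (u^T *m (A *t B) *m u) 0 0 = \tr (V^T *m B *m V *m A^T).
Proof.
move=> V; rewrite /mxtrace mulmx3E sum_tens.
under eq_bigr do under eq_bigr do rewrite sum_tens.
under eq_bigr do rewrite exchange_big /=.
rewrite exchange_big /=.
apply: eq_bigr => i _; rewrite mxE; apply: eq_bigr => j _.
rewrite mulmx3E mulr_suml; apply: eq_bigr => l _.
rewrite mulr_suml; apply: eq_bigr => k _.
rewrite tensmxE !mxE; ring.
Qed.


Lemma tens_inv d n (A : 'M[R]_d) (B : 'M[R]_n) : A \in unitmx -> B \in unitmx ->
  (A *t B) *m (invmx A *t invmx B) = 1%:M /\ (invmx A *t invmx B) *m (A *t B) = 1%:M.
Proof.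
move=> uA uB; rewrite !tensmx_mul mulmxV // mulmxV // mulVmx // mulVmx //.
by rewrite tens11.
Qed.

Lemma cast1 n (k : 'I_n) (e : n = 1 * n) : cast_ord e k = mxtens_index (ord0 : 'I_1, k).
Proof. by apply: val_inj => /=; rewrite mul0n add0n. Qed.

Lemma FkE d n (f : R -> 'cV[R]_d) t (x : 'cV[R]_n) i k :
  (Fk n f t *m x) (mxtens_index (i, k)) 0 = f t i 0 * x k 0.
Proof.
rewrite mxE (bigD1 k) //= big1 => [|j jk].
  by rewrite /Fk castmxE cast_ord_id cast1 tensmxE mxE eqxx mulr1 addr0.
rewrite /Fk castmxE cast_ord_id cast1 tensmxE mxE eq_sym (negbTE jk).
by rewrite mulr0 mul0r.
Qed.

Lemma tens_quadE d n r (A : 'M[R]_d) (B : 'M[R]_n) (X : 'M[R]_(d * n, r)) a b :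
  (X^T *m (A *t B) *m X) a b =
  \sum_i \sum_j A i j * \sum_k \sum_l X (mxtens_index (i, k)) a * B k l * X (mxtens_index (j, l)) b.
Proof.
rewrite mulmx3E sum_tens.
under eq_bigr do under eq_bigr do rewrite sum_tens.
under eq_bigr do rewrite exchange_big /=.
rewrite exchange_big /=.
apply: eq_bigr => i _; apply: eq_bigr => j _.
rewrite exchange_big mulr_sumr; apply: eq_bigr => k _.
rewrite mulr_sumr; apply: eq_bigr => l _.
rewrite tensmxE !mxE; ring.
Qed.


Lemma rowcatE d n r (Xhat : 'M[R]_(d * n, r)) k i a :
  rowcat Xhat k (mxtens_index (i, a)) = Xhat (mxtens_index (i, k)) a.
Proof. by rewrite !mxE mxtens_indexK. Qed.

Lemma sumdl r (a : 'I_r) x y (H : 'I_r -> R) :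
  \sum_c (x * (1%:M : 'M[R]_r) a c) * y * H c = x * y * H a.
Proof.
rewrite (bigD1 a) //= big1 ?addr0 => [|c ca]; first by rewrite mxE eqxx mulr1.
by rewrite mxE eq_sym (negbTE ca) mulr0 !mul0r.
Qed.

Lemma sumdr r (b : 'I_r) x y (H : 'I_r -> R) :
  \sum_e x * (y * (1%:M : 'M[R]_r) e b) * H e = x * y * H b.
Proof.
rewrite (bigD1 b) //= big1 ?addr0 => [|c ca]; first by rewrite mxE eqxx mulr1.
by rewrite mxE (negbTE ca) mulr0 mulr0 !mul0r.
Qed.

Lemma WmxE d n r (v : 'cV[R]_d) (U : 'M[R]_n) (Xhat : 'M[R]_(d * n, r)) a b :
  castmx (mul1n r, mul1n r) ((v^T *t (1%:M : 'M[R]_r)) *m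
     ((rowcat Xhat)^T *m invmx U *m rowcat Xhat) *m (v *t (1%:M : 'M[R]_r))) a b
  = (Xhat^T *m ((v *m v^T) *t invmx U) *m Xhat) a b.
Proof.
rewrite tens_quadE castmxE !cast1 mulmx3E sum_tens.
under eq_bigr do under eq_bigr do rewrite sum_tens.
under eq_bigr do under eq_bigr do under eq_bigr do under eq_bigr do rewrite !tensmxE.
under eq_bigr do under eq_bigr do under eq_bigr do rewrite sumdl.
under eq_bigr do rewrite exchange_big /=.
under eq_bigr do under eq_bigr do rewrite sumdr.
rewrite exchange_big /=.
apply: eq_bigr => i _; apply: eq_bigr => j _.
rewrite mulmx3E exchange_big mulr_sumr [RHS]mulr_sumr; apply: eq_bigr => k _.
rewrite mulr_sumr [RHS]mulr_sumr; apply: eq_bigr => l _.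
rewrite !mxE big_ord1 !mxE !mxtens_indexK /=; ring.
Qed.
End Alg.

Theorem corollary2 (R : realType) (K : set R) (w : R -> R) (d n rho : nat)
  (f : R -> 'cV[R]_d) (U : 'M[R]_n) (x : R -> 'cV[R]_n)
  (Ups : 'M[R]_(d * n, rho * n)) (z : 'cV[R]_(rho * n)) :
  measurable K -> (0 < leb K)%E ->
  (forall t, K t -> 0 <= w t) ->
  (@leb R).-integrable K (fun t => (w t)%:E) ->
  countable [set t | K t /\ w t = 0] ->
  L2w K w f ->
  posdef (wint K w (fun t => f t *m (f t)^T)) ->
  U^T = U -> posdef U ->
  L2w K w x ->
  Ups *m z = wint K w (fun t => Fk n f t *m x t) ->
  let Finv := wint K w (fun t => f t *m (f t)^T) in
  let theta := wint K w (fun t => Fk n f t *m x t) in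
  let rhs := fun Xhat : 'M[R]_(d * n, rho * n) =>
    (z^T *m (Ups^T *m Xhat + Xhat^T *m Ups
             - Xhat^T *m (Finv *t invmx U) *m Xhat) *m z) 0 0 in
  [/\ forall Xhat, rhs Xhat <= Rintegral (@leb R) K
                     (fun t => w t * ((x t)^T *m U *m x t) 0 0),
      forall Xhat, rhs Xhat =
        (z^T *m (Ups^T *m Xhat + Xhat^T *m Ups - Wmx K w f U Xhat) *m z) 0 0,
      forall Xhat, rhs Xhat <= (theta^T *m (invmx Finv *t U) *m theta) 0 0 &
      rhs ((invmx Finv *t U) *m Ups) = (theta^T *m (invmx Finv *t U) *m theta) 0 0].
Proof.
move=> mK Kpos w0 iw _ Lf pF sU pU Lx eqz Finv theta rhs.
have mK' : measurable (K : set (measurableTypeR R)) := mK.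
have mw : measurable_fun (K : set (measurableTypeR R)) w.
  by apply/measurable_EFinP; exact: (measurable_int _ iw).
have iff : ient K w (fun t => f t *m (f t)^T) := ient_gh mK' w0 mw Lf Lf.
have ixf : ient K w (fun t => x t *m (f t)^T) := ient_gh mK' w0 mw Lx Lf.
have ifx : ient K w (fun t => f t *m (x t)^T) := ient_gh mK' w0 mw Lf Lx.
have ixx : ient K w (fun t => x t *m (x t)^T) := ient_gh mK' w0 mw Lx Lx.
have uF : Finv \in unitmx := posdef_unit pF.
have uU : U \in unitmx := posdef_unit pU.
set Fi := invmx Finv.
set Ui := invmx U.
have sF : Finv^T = Finv.
  rewrite /Finv -wint_tr; congr wint; apply: funext => t.
  by rewrite trmx_mul trmxK.
have sFi : Fi^T = Fi by rewrite /Fi trmx_inv sF.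
set P := Fi *t U.
set M := Finv *t Ui.
have [MP PM] : M *m P = 1%:M /\ P *m M = 1%:M.
  have uUi : Ui \in unitmx by rewrite /Ui unitmx_inv.
  by have := tens_inv uF uUi; rewrite /Ui invmxK.
have sP : P^T = P by rewrite /P trmx_tens sFi sU.
have psdM : psd M.
  move=> u; have := reshapeE Finv Ui u; rewrite /= => ->; rewrite sF.
  set V := \matrix_(k, i) _.
  set C := V^T *m Ui *m V.
  have -> : \tr (C *m Finv) = RI K w (fun t => \tr (C *m (f t *m (f t)^T) *m 1%:M)).
    rewrite (RI_tr mK'); last exact: (ient_mulmx mK' C 1%:M iff).
    by rewrite (wint_mulmx mK') // mulmx1.
  apply: (RI_ge0 w0) => t Kt.
  rewrite mulmx1 mulmxA mxtrace_mulC mulmxA /mxtrace big_ord1 /C.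
  have := psd_inv sU pU (V *m f t).
  by rewrite trmx_mul !mulmxA.
have e00D : forall A B : 'M[R]_1, (A + B) 0 0 = A 0 0 + B 0 0 by move=> A B; rewrite mxE.
have e00B : forall A B : 'M[R]_1, (A - B) 0 0 = A 0 0 - B 0 0 by move=> A B; rewrite !mxE.
have rhsE : forall X, rhs X = (theta^T *m (X *m z)) 0 0 + ((X *m z)^T *m theta) 0 0
                              - ((X *m z)^T *m M *m (X *m z)) 0 0.
  have eqz' : Ups *m z = theta := eqz.
  move=> X; rewrite /rhs -/Ui -/M -eqz'.
  rewrite mulmxBr mulmxDr mulmxBl mulmxDl e00B e00D !trmx_mul !mulmxA.
  done.
have h1 : forall v : 'cV[R]_(d * n), v^T *m M *m (P *m theta) = v^T *m theta.
  by move=> v; rewrite mulmxA -(mulmxA v^T) MP mulmx1.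
have h2 : forall v : 'cV[R]_(d * n), (P *m theta)^T *m M *m v = theta^T *m v.
  by move=> v; rewrite trmx_mul sP -[theta^T *m P *m M]mulmxA PM mulmx1.
have h3 : (P *m theta)^T *m M *m (P *m theta) = theta^T *m P *m theta.
  by rewrite trmx_mul sP -[theta^T *m P *m M]mulmxA PM mulmx1 mulmxA.
have part3 : forall X, rhs X <= (theta^T *m P *m theta) 0 0.
  move=> X; rewrite rhsE; set v := X *m z.
  have := psdM (v - P *m theta).
  have -> : (v - P *m theta)^T = v^T - (P *m theta)^T by apply/matrixP => i j; rewrite !mxE.
  rewrite !mulmxBl !mulmxBr h1 h2 h3 !e00B.
  lra.
have part4 : rhs (P *m Ups) = (theta^T *m P *m theta) 0 0.
  have eqz' : Ups *m z = theta := eqz.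
  rewrite rhsE -[P *m Ups *m z]mulmxA eqz'.
  rewrite h3 trmx_mul sP !mulmxA; lra.
have part2 : forall X : 'M[R]_(d * n, rho * n), Wmx K w f U X = X^T *m M *m X.
  move=> X; apply/matrixP => a b.
  pose c := fun i j => \sum_k \sum_l X (mxtens_index (i, k)) a * Ui k l * X (mxtens_index (j, l)) b.
  have q : forall A : 'M[R]_d, (X^T *m (A *t Ui) *m X) a b = \sum_i \sum_j c i j * A i j.
    move=> A; rewrite tens_quadE; apply: eq_bigr => i _; apply: eq_bigr => j _.
    by rewrite mulrC.
  rewrite [RHS]q.
  transitivity (RI K w (fun t => \sum_i \sum_j c i j * (f t *m (f t)^T) i j)).
    rewrite /Wmx /= mxE /RI; apply: eq_Rintegral => t _ /=; by rewrite WmxE q.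
  rewrite (RI_sum mK'); last first.
    by move=> i; apply: (wI_sum mK') => j; apply: (wIZ mK'); apply: iff.
  apply: eq_bigr => i _; rewrite (RI_sum mK'); last first.
    by move=> j; apply: (wIZ mK'); apply: iff.
  apply: eq_bigr => j _; rewrite (RIZ mK'); last exact: iff.
  by rewrite /Finv mxE.
have trN : forall k (A : 'M[R]_k), \tr (- A) = - \tr A.
  by move=> k A; rewrite /mxtrace -sumrN; apply: eq_bigr => i _; rewrite mxE.
have part1 : (theta^T *m P *m theta) 0 0 <= Rintegral (@leb R) K (fun t => w t * ((x t)^T *m U *m x t) 0 0).
  set Sxf := wint K w (fun t => x t *m (f t)^T).
  set Sxx := wint K w (fun t => x t *m (x t)^T).
  have Sfx : wint K w (fun t => f t *m (x t)^T) = Sxf^T.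
    rewrite /Sxf -wint_tr; congr wint; apply: funext => t.
    by rewrite trmx_mul trmxK.
  have thV : \matrix_(k, i) theta (mxtens_index (i, k)) 0 = Sxf.
    apply/matrixP => k i; rewrite /theta /Sxf !mxE.
    by apply: eq_Rintegral => t _ /=; rewrite FkE mxE big_ord1 mxE [f t i 0 * _]mulrC.
  have thP : (theta^T *m P *m theta) 0 0 = \tr (Sxf^T *m U *m Sxf *m Fi).
    by rewrite /P; have := reshapeE Fi U theta; rewrite /= thV sFi.
  have LE : Rintegral (@leb R) K (fun t => w t * ((x t)^T *m U *m x t) 0 0) = \tr (U *m Sxx).
    transitivity (RI K w (fun t => \tr (U *m (x t *m (x t)^T) *m 1%:M))).
      apply: eq_Rintegral => t _; congr (_ * _).
      by rewrite mulmx1 mulmxA mxtrace_mulC mulmxA /mxtrace big_ord1.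
    rewrite (RI_tr mK'); last exact: (ient_mulmx mK' U 1%:M ixx).
    by rewrite (wint_mulmx mK') // mulmx1.
  set C := Sxf *m Fi.
  have iA := ient_mulmx mK' C 1%:M ifx.
  have iB := ient_mulmx mK' 1%:M C^T ixf.
  have iD := ient_mulmx mK' C C^T iff.
  have iG := ientD mK' (ientD mK' ixx (ientN mK' iB)) (ientN mK' (ientD mK' iA (ientN mK' iD))).
  have G : forall t, (x t - C *m f t) *m (x t - C *m f t)^T =
     x t *m (x t)^T + - (1%:M *m (x t *m (f t)^T) *m C^T)
     + - (C *m (f t *m (x t)^T) *m 1%:M + - (C *m (f t *m (f t)^T) *m C^T)).
    move=> t.
    have -> : (x t - C *m f t)^T = (x t)^T - (C *m f t)^T.
      by apply/matrixP => i j; rewrite !mxE.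
    rewrite trmx_mul mulmxBl !mulmxBr mulmx1 mul1mx !mulmxA.
    done.
  have pos : 0 <= \tr (U *m Sxx) - \tr (U *m (Sxf *m Fi *m Sxf^T)).
    have := RI_ge0 w0 (g := fun t => ((x t - C *m f t)^T *m U *m (x t - C *m f t)) 0 0)
      (fun t _ => posdef_psd pU (x t - C *m f t)).
    have -> : RI K w (fun t => ((x t - C *m f t)^T *m U *m (x t - C *m f t)) 0 0)
       = RI K w (fun t => \tr (U *m (x t *m (x t)^T + - (1%:M *m (x t *m (f t)^T) *m C^T)
     + - (C *m (f t *m (x t)^T) *m 1%:M + - (C *m (f t *m (f t)^T) *m C^T))) *m 1%:M)).
      apply: eq_RI => t; rewrite -G.
      by rewrite mulmx1 mulmxA mxtrace_mulC mulmxA /mxtrace big_ord1.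
    rewrite (RI_tr mK'); last exact: (ient_mulmx mK' U 1%:M iG).
    rewrite (wint_mulmx mK') // mulmx1.
    rewrite (wintD mK' (ientD mK' ixx (ientN mK' iB)) (ientN mK' (ientD mK' iA (ientN mK' iD)))).
    rewrite (wintD mK' ixx (ientN mK' iB)) (wintN mK' iB).
    rewrite (wintN mK' (ientD mK' iA (ientN mK' iD))) (wintD mK' iA (ientN mK' iD)) (wintN mK' iD).
    rewrite !(wint_mulmx mK') // Sfx -/Sxx -/Sxf -/Finv mul1mx mulmx1 /C trmx_mul sFi.
    rewrite -!mulmxA mulKmx // subrr subr0 !mulmxBr mxtraceD trN !mulmxA.
    done.
  rewrite LE thP.
  have -> : \tr (Sxf^T *m U *m Sxf *m Fi) = \tr (U *m (Sxf *m Fi *m Sxf^T)).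
    by rewrite !mulmxA [RHS]mxtrace_mulC !mulmxA.
  lra.
split => //.
- by move=> X; apply: le_trans (part3 X) part1.
- by move=> X; rewrite part2.
Qed.
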